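(* Let $P$ be a finite nonempty set of nonempty linear strings over a finite alphabet $\Sigma$. Let $w_o$ be a shortest linear superstring of $P$, and let $c_o$ be a shortest circular superstring of $P\cup\overline P$. Then $2|w_o|=|c_o|$.
   Context: Let $\overline\Sigma=\{\overline a: a\in\Sigma\}$ be a disjoint copy of $\Sigma$. For $w=a_1\dots a_k$, set $\overline w=\overline{a_1}\dots\overline{a_k}$, and let $\overline P=\{\overline w: w\in P\}$. A linear superstring of a set of strings is a linear string containing each of them as a substring. A circular string $\langle a_1\dots a_n\rangle$ has length $n$, and its substrings are the finite substrings of $(a_1\dots a_n)^\infty$. A circular superstring is a circular string containing each string of the set as a substring. *)

(* Defs.v *)
From mathcomp Require Import all_boot.
Set Implicit Arguments. Unset Strict Implicit. Unset Printing Implicit Defensive.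

(* Linear strings over an alphabet T are sequences [seq T]; "substring"
   means contiguous factor, i.e. seq's [infix]. *)

Definition lin_superstring (T : eqType) (P : seq (seq T)) (w : seq T) : Prop :=
  forall p, p \in P -> infix p w.

(* The circular string <c> (of length size c >= 1) contains s as a substring:
   s is a finite factor of c^infinity, i.e. a factor of c^m for some m. *)
Definition circ_substring (T : eqType) (s c : seq T) : Prop :=
  0 < size c /\ exists m : nat, infix s (flatten (nseq m c)).

Definition circ_superstring (T : eqType) (P : seq (seq T)) (c : seq T) : Prop :=
  0 < size c /\ forall p, p \in P -> circ_substring p c.

Definition shortest_lin_superstring (T : eqType) (P : seq (seq T)) (w : seq T) :=
  lin_superstring P w /\ forall w', lin_superstring P w' -> size w <= size w'.

Definition shortest_circ_superstring (T : eqType) (P : seq (seq T)) (c : seq T) :=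
  circ_superstring P c /\ forall c', circ_superstring P c' -> size c <= size c'.

(* The barred copy: alphabet Sigma + Sigma, with a |-> inl a and
   \overline a |-> inr a. *)
Definition P_and_bar (S : finType) (P : seq (seq S)) : seq (seq (S + S)%type) :=
  [seq map inl p | p <- P] ++ [seq map inr p | p <- P].

(* Main.v *)
Require Import Defs.
From mathcomp Require Import all_boot.

Section Aux.
Variable T : eqType.
Variable q : pred T.

Lemma prefix_cut (w v s : seq T) y :
  all q s -> ~~ q y -> prefix s (w ++ y :: v) -> prefix s w.
Proof.
elim: w s => [|a w IH] [|z s] //=.
- by move=> /andP[qz _] nqy /andP[/eqP Ez _]; move: nqy; rewrite -Ez qz.
- by move=> /andP[qz qs] nqy /andP[-> /(IH _ qs nqy)].
Qed.

Lemma infix_cut (u v s : seq T) y :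
  all q s -> ~~ q y -> infix s (u ++ y :: v) -> infix s u \/ infix s v.
Proof.
move=> qs nqy; elim: u => [|a u IH]; rewrite ?cat0s ?cat_cons.
  rewrite infix_consl => /orP[/(prefix_cut [::] v s y qs nqy)|]; last by right.
  by case: s qs => //= _; left.
rewrite infix_consl => /orP[/(prefix_cut (a::u) v s y qs nqy) /prefixW|]; first by left.
move/IH => [H|]; last by right.
by left; exact: (infix_catl [:: a] H).
Qed.

Lemma infix_cycle (u v s : seq T) y m :
  all q s -> ~~ q y -> infix s (flatten (nseq m (u ++ y :: v))) -> infix s (v ++ u).
Proof.
move=> qs nqy.
have G : forall m, infix s (v ++ flatten (nseq m (u ++ y :: v))) -> infix s (v ++ u).
  elim=> [|k IH]; rewrite [flatten _]/=.
    by rewrite cats0 => H; apply: infix_trans H (prefix_infix _ _).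
  rewrite -catA catA cat_cons => /(infix_cut _ _ _ _ qs nqy) [//|]; exact: IH.
case: m => [|k]; rewrite [flatten _]/=.
  by rewrite infixs0 => /eqP ->; exact: infix0s.
rewrite -catA cat_cons => /(infix_cut _ _ _ _ qs nqy) [H|]; last exact: G.
exact: infix_catl.
Qed.
End Aux.

Lemma infix_map (A B : eqType) (f : A -> B) s t : infix s t -> infix (map f s) (map f t).
Proof. by move=> /infixP[a [b ->]]; apply/infixP; exists (map f a), (map f b); rewrite !map_cat. Qed.

Lemma infix_pmap (A B : eqType) (f : A -> option B) (g : B -> A) (p : seq B) t :
  pcancel g f -> infix (map g p) t -> infix p (pmap f t).
Proof.
move=> gK /infixP[a [b ->]]; apply/infixP; exists (pmap f a), (pmap f b).
by rewrite !pmap_cat (map_pK gK).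
Qed.

Lemma mem_flatten_nseq (A : eqType) (x : A) m c : x \in flatten (nseq m c) -> x \in c.
Proof. by elim: m => [|m IH] //=; rewrite mem_cat => /orP[//|/IH]. Qed.

Definition getl (S : Type) (x : (S + S)%type) : option S := if x is inl a then Some a else None.
Definition getr (S : Type) (x : (S + S)%type) : option S := if x is inr a then Some a else None.

Lemma size_lr (S : Type) (c : seq (S + S)%type) :
  size (pmap (@getl S) c) + size (pmap (@getr S) c) = size c.
Proof. by elim: c => [|[a|a] c IH] //=; rewrite ?addSn ?addnS IH. Qed.

Theorem lemma5 (S : finType) (P : seq (seq S)) (w_o : seq S) (c_o : seq (S + S)%type) :
  P != [::] ->
  (forall p, p \in P -> p != [::]) ->
  shortest_lin_superstring P w_o ->
  shortest_circ_superstring (P_and_bar P) c_o ->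
  2 * size w_o = size c_o.
Proof.
move=> P0 Pne [Lw Wmin] [[Cpos Csup] Cmin].
have [p0 p0P] : exists p0, p0 \in P by case: P P0 {Pne Lw Wmin Csup Cmin} => // a l _; exists a; rewrite mem_head.
have w0 : 0 < size w_o.
  by apply: leq_trans (size_infix (Lw _ p0P)); rewrite lt0n size_eq0 Pne.
have ex : forall g' : S -> (S + S)%type, circ_substring (map g' p0) c_o -> exists a, g' a \in c_o.
  move=> g'; case: p0 p0P (Pne p0 p0P) => // a0 p0' _ _ [_ [m Hm]].
  exists a0; apply: (@mem_flatten_nseq _ _ m).
  by apply: (mem_infix Hm); rewrite /= mem_head.
have key : forall (f : (S + S)%type -> option S) g, pcancel g f ->
    (forall p, p \in P -> circ_substring (map g p) c_o) ->
    (exists y, (y \in c_o) && (f y == None)) ->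
    size w_o <= size (pmap f c_o).
  move=> f g gK Hs [y /andP[yc /eqP fy]].
  case/splitPr: yc Hs => u v Hs.
  have Hl : lin_superstring P (pmap f (v ++ u)).
    move=> p pP; have [_ [m Hm]] := Hs p pP.
    apply: (@infix_pmap _ _ f g p _ gK).
    apply: (@infix_cycle _ (fun x => f x : bool) u v _ y m) => //.
    - by rewrite all_map; apply/allP => x _ /=; rewrite gK.
    - by rewrite /= fy.
  have := Wmin _ Hl.
  by rewrite !size_pmap !count_cat /= fy addnC.
have HL : size w_o <= size (pmap (@getl S) c_o).
  apply: (key _ (@inl S S)) => //.
  - move=> p pP; apply: Csup; rewrite mem_cat; apply/orP; left; exact: map_f.
  - have [a Ha] : exists a, @inr S S a \in c_o.
      by apply: ex; apply: Csup; rewrite mem_cat; apply/orP; right; exact: map_f.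
    by exists (inr a); rewrite Ha.
have HR : size w_o <= size (pmap (@getr S) c_o).
  apply: (key _ (@inr S S)) => //.
  - move=> p pP; apply: Csup; rewrite mem_cat; apply/orP; right; exact: map_f.
  - have [a Ha] : exists a, @inl S S a \in c_o.
      by apply: ex; apply: Csup; rewrite mem_cat; apply/orP; left; exact: map_f.
    by exists (inl a); rewrite Ha.
have HC : size c_o <= 2 * size w_o.
  have -> : 2 * size w_o = size (map (@inl S S) w_o ++ map (@inr S S) w_o).
    by rewrite size_cat !size_map mul2n addnn.
  apply: Cmin; split.
    rewrite size_cat size_map; apply: ltn_addr.
    exact: w0.
  move=> p; rewrite mem_cat => /orP[] /mapP[p' p'P ->]; split.
  - by rewrite size_cat size_map; exact: ltn_addr.
  - by exists 1; rewrite /= cats0; apply: infix_catr; apply: infix_map; apply: Lw.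
  - by rewrite size_cat size_map; exact: ltn_addr.
  - by exists 1; rewrite /= cats0; apply: infix_catl; apply: infix_map; apply: Lw.
have H := @size_lr S c_o.
apply/eqP; rewrite eqn_leq HC andbT.
by rewrite -H mul2n -addnn leq_add.
Qed.
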